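(* Let a single bidder have a valuation with a continuously differentiable, positive density $f$ on $[0,1]$ and cdf $F$, satisfying the monotone hazard rate condition, i.e. $(1-F(r))/f(r)$ is non-increasing in $r$. For $r\in[0,1]$ let $x(r)=\int_r^1 v f(v)\,dv$ and $y(r)=r\int_r^1 f(v)\,dv$ (the welfare and revenue of the take-it-or-leave-it price $r$). Then for all $r\in(0,1)$, $$x'(r)\,y''(r)-y'(r)\,x''(r)\ \ge\ 0,$$ i.e. the curve $r\mapsto (x(r),y(r))$ (the set of (welfare, revenue) points of all single-bidder deterministic mechanisms) is locally convex.
   Context: For a single bidder, every deterministic truthful mechanism is a posted price $r$: the bidder gets the item and pays $r$ iff her value is at least $r$. *)

(* Defs.v *)
From Stdlib Require Import Reals Lra ClassicalEpsilon.
Open Scope R_scope.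

(* Total Riemann integral: the Riemann integral of f from a to b when f is
   Riemann integrable there (value independent of the integrability proof),
   and 0 otherwise. *)
Definition Rint (f : R -> R) (a b : R) : R :=
  match excluded_middle_informative (exists _ : Riemann_integrable f a b, True) with
  | left H => RiemannInt (proj1_sig (constructive_indefinite_description _ H))
  | right _ => 0
  end.

Definition cdf (f : R -> R) (r : R) : R := Rint f 0 r.

Definition welfare (f : R -> R) (r : R) : R := Rint (fun v => v * f v) r 1.

Definition revenue (f : R -> R) (r : R) : R := r * Rint f r 1.

(* Main.v *)
Require Import Defs.
From Stdlib Require Import Reals Lra ClassicalEpsilon.
From Coquelicot Require Import Coquelicot.
Open Scope R_scope.

Lemma Rint_RInt g a b : ex_RInt g a b -> Rint g a b = RInt g a b.
Proof.
  intros H. unfold Rint.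
  destruct (excluded_middle_informative _) as [e|n].
  - destruct (constructive_indefinite_description _ e) as [pr ?]; simpl.
    symmetry; apply RInt_Reals.
  - exfalso; apply n; exists (ex_RInt_Reals_0 _ _ _ H); exact I.
Qed.

Lemma loc01 (r : R) (P : R -> Prop) : 0 < r < 1 -> (forall y, 0 < y < 1 -> P y) -> locally r P.
Proof.
  intros Hr H.
  assert (Hp : 0 < Rmin r (1 - r)) by (apply Rmin_glb_lt; lra).
  exists (mkposreal _ Hp). intros y Hy. apply H.
  change (Rabs (y - r) < Rmin r (1 - r)) in Hy.
  apply Rabs_lt_between' in Hy.
  pose proof (Rmin_l r (1-r)); pose proof (Rmin_r r (1-r)). lra.
Qed.

Lemma ext_lim (g h : R -> R) r l : 0 < r < 1 -> (forall y, 0 < y < 1 -> g y = h y) ->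
  derivable_pt_lim g r l -> derivable_pt_lim h r l.
Proof.
  intros Hr He Hd. apply is_derive_Reals. apply (is_derive_ext_loc g).
  - apply loc01; auto.
  - apply is_derive_Reals; auto.
Qed.

Lemma deriv_nonpos (g : R -> R) r l : 0 < r < 1 ->
  (forall s, r <= s <= 1 -> g s <= g r) -> derivable_pt_lim g r l -> l <= 0.
Proof.
  intros Hr Hm Hd. destruct (Rle_or_lt l 0) as [|Hl]; [assumption|exfalso].
  destruct (Hd l Hl) as [d Hdel].
  set (h := Rmin (d/2) ((1-r)/2)).
  pose proof (cond_pos d) as dpos.
  assert (hpos : 0 < h) by (apply Rmin_glb_lt; lra).
  assert (hle1 : h <= (1-r)/2) by apply Rmin_r.
  assert (hled : h <= d/2) by apply Rmin_l.
  assert (h0 : h <> 0) by lra.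
  assert (ha : Rabs h < d) by (rewrite Rabs_right; lra).
  specialize (Hdel h h0 ha).
  assert (Hg : g (r + h) <= g r) by (apply Hm; lra).
  set (q := (g (r + h) - g r) / h) in *.
  assert (qh : q * h = g (r + h) - g r) by (unfold q; field; lra).
  apply Rabs_lt_between' in Hdel. nra.
Qed.

Theorem proposition1
  (f f' : R -> R)
  (Hder : forall t, 0 <= t <= 1 -> derivable_pt_lim f t (f' t))
  (Hf'cont : forall t, 0 <= t <= 1 -> continuity_pt f' t)
  (Hpos : forall t, 0 <= t <= 1 -> 0 < f t)
  (Hdens : Rint f 0 1 = 1)
  (Hmhr : forall r s, 0 <= r -> r <= s -> s <= 1 ->
            (1 - cdf f s) / f s <= (1 - cdf f r) / f r)
  (x1 x2 y1 y2 : R -> R)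
  (Hx1 : forall t, 0 < t < 1 -> derivable_pt_lim (welfare f) t (x1 t))
  (Hx2 : forall t, 0 < t < 1 -> derivable_pt_lim x1 t (x2 t))
  (Hy1 : forall t, 0 < t < 1 -> derivable_pt_lim (revenue f) t (y1 t))
  (Hy2 : forall t, 0 < t < 1 -> derivable_pt_lim y1 t (y2 t)) :
  forall r, 0 < r < 1 -> x1 r * y2 r - y1 r * x2 r >= 0.
Proof.
  intros r Hr.
  set (g := fun v => v * f v).
  assert (fcp : forall t, 0 <= t <= 1 -> continuity_pt f t).
  { intros t Ht. apply (derivable_continuous_pt f t (exist _ (f' t) (Hder t Ht))). }
  assert (fc : forall t, 0 <= t <= 1 -> continuous f t).
  { intros t Ht. apply continuity_pt_filterlim. auto. }
  assert (gc : forall t, 0 <= t <= 1 -> continuous g t).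
  { intros t Ht. apply continuity_pt_filterlim. unfold g.
    apply (continuity_pt_mult (fun v => v) f); [apply continuity_pt_id|auto]. }
  assert (exf : forall a b, 0 <= a <= 1 -> 0 <= b <= 1 -> ex_RInt f a b).
  { intros a b Ha Hb. apply (@ex_RInt_continuous R_CompleteNormedModule). intros z Hz. apply fc.
    pose proof (Rmin_glb a b 0). pose proof (Rmax_lub a b 1).
    split; [apply Rle_trans with (Rmin a b)|apply Rle_trans with (Rmax a b)]; try lra.
    all: try (apply Rmin_glb; lra); try (apply Rmax_lub; lra). }
  assert (exg : forall a b, 0 <= a <= 1 -> 0 <= b <= 1 -> ex_RInt g a b).
  { intros a b Ha Hb. apply (@ex_RInt_continuous R_CompleteNormedModule). intros z Hz. apply gc.
    split; [apply Rle_trans with (Rmin a b)|apply Rle_trans with (Rmax a b)]; try lra.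
    all: try (apply Rmin_glb; lra); try (apply Rmax_lub; lra). }
  set (G := fun t => RInt f t 1).
  assert (eG : forall t, 0 <= t <= 1 -> Rint f t 1 = G t).
  { intros t Ht. apply Rint_RInt, exf; lra. }
  assert (eW : forall t, 0 <= t <= 1 -> welfare f t = RInt g t 1).
  { intros t Ht. apply Rint_RInt, exg; lra. }
  assert (eC : forall t, 0 <= t <= 1 -> 1 - cdf f t = G t).
  { intros t Ht. unfold cdf. rewrite <- Hdens.
    rewrite !Rint_RInt; try (apply exf; lra).
    rewrite <- (RInt_Chasles f 0 t 1); try (apply exf; lra).
    unfold G, plus; simpl. ring. }
  assert (dG : forall t, 0 < t < 1 -> derivable_pt_lim G t (- f t)).
  { intros t Ht. apply is_derive_Reals.
    apply (is_derive_RInt' f G t 1).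
    - apply loc01; auto. intros y Hy. apply (@RInt_correct R_CompleteNormedModule), exf; lra.
    - apply fc; lra. }
  assert (dW : forall t, 0 < t < 1 -> derivable_pt_lim (welfare f) t (- g t)).
  { intros t Ht. apply is_derive_Reals.
    apply (is_derive_RInt' g (welfare f) t 1).
    - apply loc01; auto. intros y Hy. rewrite eW; [|lra]. apply (@RInt_correct R_CompleteNormedModule), exg; lra.
    - apply gc; lra. }
  assert (ex1 : forall t, 0 < t < 1 -> x1 t = - (t * f t)).
  { intros t Ht. apply (uniqueness_limite (welfare f) t); auto. }
  assert (dY : forall t, 0 < t < 1 -> derivable_pt_lim (revenue f) t (1 * G t + t * - f t)).
  { intros t Ht. apply (ext_lim (fun s => s * G s)); auto.
    - intros y Hy. unfold revenue. rewrite eG; auto; lra.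
    - apply (derivable_pt_lim_mult (fun s => s) G); [apply derivable_pt_lim_id|auto]. }
  assert (ey1 : forall t, 0 < t < 1 -> y1 t = 1 * G t + t * - f t).
  { intros t Ht. apply (uniqueness_limite (revenue f) t); auto. }
  assert (Hr' : 0 <= r <= 1) by lra.
  assert (ex2 : x2 r = - (1 * f r + r * f' r)).
  { apply (uniqueness_limite x1 r); auto.
    apply (ext_lim (fun s => - (s * f s))); auto.
    - intros y Hy; rewrite ex1; auto.
    - apply (derivable_pt_lim_opp (fun s => s * f s)).
      apply (derivable_pt_lim_mult (fun s => s) f); [apply derivable_pt_lim_id|auto]. }
  assert (ey2 : y2 r = - f r - (1 * f r + r * f' r)).
  { apply (uniqueness_limite y1 r); auto.
    apply (ext_lim (fun s => G s - s * f s)); auto.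
    - intros y Hy; rewrite ey1; auto; ring.
    - apply (derivable_pt_lim_minus G (fun s => s * f s)); auto.
      apply (derivable_pt_lim_mult (fun s => s) f); [apply derivable_pt_lim_id|auto]. }
  assert (fr : 0 < f r) by auto.
  assert (dH : derivable_pt_lim (fun s => (1 - cdf f s) / f s) r
                 ((- f r * f r - f' r * G r) / (f r)²)).
  { apply (ext_lim (fun s => G s / f s)); auto.
    - intros y Hy. rewrite eC; auto; lra.
    - apply (derivable_pt_lim_div G f); auto; lra. }
  assert (Hn : (- f r * f r - f' r * G r) / (f r)² <= 0).
  { apply (deriv_nonpos (fun s => (1 - cdf f s) / f s) r); auto. intros s Hs. apply Hmhr; lra. }
  assert (Hn' : - f r * f r - f' r * G r <= 0).
  { assert (Hq : 0 < (f r)²) by (unfold Rsqr; nra).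
    replace (- f r * f r - f' r * G r) with
      (((- f r * f r - f' r * G r) / (f r)²) * (f r)²) by (field; lra).
    nra. }
  assert (G0 : 0 <= G r).
  { unfold G. apply RInt_ge_0; try lra. apply exf; lra.
    intros x Hx. left; apply Hpos; lra. }
  rewrite ex1, ey1, ex2, ey2; auto.
  apply Rle_ge.
  assert (0 <= r * (f r * f r + f' r * G r)) by nra.
  assert (0 <= G r * f r) by nra.
  nra.
Qed.
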